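(* Let $i\ge 3$ and $k\ge 3$ be integers, let $p$ be a nonnegative integer, and put $r=\lfloor (F_i-1)/F_k\rfloor$. If $r\ge p$, then $$n_p(F_i,F_{i+2},F_{i+k})=\tfrac12\bigl((F_i+2pF_k-1)F_{i+2}-F_i+1\bigr)-\tfrac12\bigl(2rF_i-(r+p+1)(r-p)F_k\bigr)F_{k-2}.$$
   Context: Fibonacci numbers: $F_0=0$, $F_1=1$, $F_n=F_{n-1}+F_{n-2}$. For positive integers $a_1,\dots,a_l$ with $\gcd(a_1,\dots,a_l)=1$ and an integer $n$, let $d(n;a_1,\dots,a_l)$ be the number of tuples $(x_1,\dots,x_l)$ of nonnegative integers with $a_1x_1+\dots+a_lx_l=n$. For a nonnegative integer $p$, the $p$-Sylvester number $n_p(a_1,\dots,a_l)$ is the number of nonnegative integers $n$ with $d(n;a_1,\dots,a_l)\le p$. *)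

(* Defs.v *)
From mathcomp Require Import all_boot all_order all_algebra.
Set Implicit Arguments. Unset Strict Implicit. Unset Printing Implicit Defensive.

Fixpoint fib (n : nat) : nat :=
  match n with
  | 0 => 0
  | 1 => 1
  | (m.+1 as k).+1 => fib k + fib m
  end.

(* d(n; a_1,...,a_l): number of tuples (x_1,...,x_l) of nonnegative integers
   with a_1 x_1 + ... + a_l x_l = n.  For positive a_i every solution has
   x_i <= n, so we count tuples in {0..n}^l. *)
Definition num_reps (a : seq nat) (n : nat) : nat :=
  #|[set x : {ffun 'I_(size a) -> 'I_n.+1} |
      \sum_(j < size a) nth 0 a j * x j == n]|.

Definition count_le (a : seq nat) (p N : nat) : nat :=
  #|[set n : 'I_N | num_reps a n <= p]|.

(* m is the p-Sylvester number n_p(a): the set {n >= 0 | d(n;a) <= p} is finite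
   and has exactly m elements. *)
Definition is_sylvester_p (a : seq nat) (p m : nat) : Prop :=
  exists N : nat, (forall n, N <= n -> p < num_reps a n) /\ count_le a p N = m.

(* Main.v *)
Require Import Defs.
From mathcomp Require Import all_boot all_order all_algebra.
From mathcomp Require Import zify.
Set Implicit Arguments. Unset Strict Implicit. Unset Printing Implicit Defensive.


Lemma fibSS n : fib n.+2 = fib n.+1 + fib n.
Proof. by []. Qed.

Lemma fib_mono n : fib n <= fib n.+1.
Proof. case: n => [|n] //; rewrite fibSS; lia. Qed.

Lemma fib_monoD n m : fib n <= fib (n + m).
Proof.
elim: m => [|m IH]; first by rewrite addn0.
by apply: leq_trans IH _; rewrite addnS fib_mono.
Qed.

Lemma fib_pos n : 0 < n -> 0 < fib n.
Proof.
case: n => // n _; have := fib_monoD 1 n; rewrite add1n /=; lia.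
Qed.

Lemma fib_add i k0 : fib (i + k0.+2) + fib k0 * fib i = fib k0.+2 * fib (i + 2).
Proof.
have H : forall k, (fib (i + k.+2) + fib k * fib i = fib k.+2 * fib (i + 2)) /\
   (fib (i + k.+3) + fib k.+1 * fib i = fib k.+3 * fib (i + 2)).
  elim=> [|k [IH1 IH2]].
    rewrite !addnS !addn0 (fibSS i.+1) (fibSS i).
    rewrite /=. lia.
  split; first exact: IH2.
  have -> : i + k.+4 = (i + k.+2).+2 by rewrite !addnS.
  rewrite fibSS.
  have e1 : (i + k.+2).+1 = i + k.+3 by rewrite !addnS.
  rewrite e1.
  have e2 := fibSS k. have e3 := fibSS k.+2. rewrite e3 e2 !mulnDl. rewrite e2 mulnDl in IH1. rewrite mulnDl in IH2. lia.
by case: (H k0).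
Qed.

Lemma coprime_fibS n : coprime (fib n) (fib n.+1).
Proof.
elim: n => [|n IH]; first by rewrite /coprime gcd0n.
rewrite /coprime fibSS gcdnDl gcdnC. exact: IH.
Qed.


Lemma sum_x a s n : 0 < a ->
  \sum_(x < n.+1) ((a * x + s == n) : nat) = ((s <= n) && (a %| n - s)).
Proof.
move=> a0.
case: (boolP ((s <= n) && (a %| n - s))) => [/andP[sn /dvdnP[m hm]]|H].
  have mlt : m < n.+1.
    have : m * a <= n by rewrite -hm leq_subr.
    nia.
  rewrite (bigD1 (Ordinal mlt)) //= big1 ?addn0.
    by rewrite mulnC -hm subnK // eqxx.
  move=> x /negbTE hx; apply/eqP; rewrite eqb0; apply/negP => /eqP e.
  move/negP: hx; apply; apply/eqP/val_inj => /=.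
  apply/eqP; rewrite -(eqn_pmul2l a0); apply/eqP. lia.
rewrite big1 // => x _; apply/eqP; rewrite eqb0; apply/negP => /eqP e.
move/negP: H; apply; apply/andP; split; first lia.
apply/dvdnP; exists x; lia.
Qed.

Definition phi3 n (t : 'I_n.+1 * 'I_n.+1 * 'I_n.+1) : {ffun 'I_3 -> 'I_n.+1} :=
  [ffun j : 'I_3 => match val j with 0 => t.1.1 | 1 => t.1.2 | _ => t.2 end].

Lemma phi3_inj n : injective (@phi3 n).
Proof.
move=> [[x1 y1] z1] [[x2 y2] z2] e.
have e0 := congr1 (fun f : {ffun 'I_3 -> 'I_n.+1} => f ord0) e.
have e1 := congr1 (fun f : {ffun 'I_3 -> 'I_n.+1} => f (@Ordinal 3 1 isT)) e.
have e2 := congr1 (fun f : {ffun 'I_3 -> 'I_n.+1} => f (@Ordinal 3 2 isT)) e.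
rewrite /phi3 !ffunE /= in e0 e1 e2. by rewrite e0 e1 e2.
Qed.

Lemma num_reps3 a b c n : 0 < a ->
  num_reps [:: a; b; c] n =
  \sum_(y < n.+1) \sum_(z < n.+1) ((b*y + c*z <= n) && (a %| n - (b*y+c*z))).
Proof.
move=> a0.
rewrite /num_reps.
set S := [set x | _].
have -> : S = @phi3 n @: [set t : 'I_n.+1 * 'I_n.+1 * 'I_n.+1 | a * t.1.1 + b * t.1.2 + c * t.2 == n].
  apply/setP => f; rewrite inE.
  apply/idP/imsetP.
    move=> hf. exists (f ord0, f (@Ordinal 3 1 isT), f (@Ordinal 3 2 isT)).
      rewrite inE /=. move: hf; rewrite !big_ord_recl big_ord0 /=.
      have -> : lift ord0 (lift ord0 ord0) = (@Ordinal 3 2 isT) by apply: val_inj.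
      have -> : lift ord0 (@ord0 1) = (@Ordinal 3 1 isT) by apply: val_inj.
      by rewrite addn0 addnA.
    apply/ffunP => j; rewrite /phi3 ffunE /=.
    case: j => [[|[|[|j]]] hj] //=; try (congr (f _); apply: val_inj; done).
  move=> [t]; rewrite inE => ht ->.
  rewrite !big_ord_recl big_ord0 /phi3 /= !ffunE /=.
  by rewrite addn0 addnA.
rewrite card_imset; last exact: phi3_inj.
rewrite -sum1_card big_mkcond /=.
under eq_bigr do rewrite inE.
rewrite -(pair_bigA _ (fun (xy : 'I_n.+1 * 'I_n.+1) (z : 'I_n.+1) => if a * xy.1 + b * xy.2 + c * z == n then 1 else 0)) /=.
rewrite -(pair_bigA _ (fun (x y : 'I_n.+1) => \sum_(z < n.+1) if a * x + b * y + c * z == n then 1 else 0)) /=.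
rewrite exchange_big /=.
apply: eq_bigr => y _.
rewrite exchange_big /=.
apply: eq_bigr => z _.
rewrite -(sum_x _ _ a0).
apply: eq_bigr => x _.
by rewrite -addnA; case: eqP.
Qed.


Lemma inv_mod a b : 0 < a -> coprime a b -> exists b', b' * b = 1 %[mod a].
Proof.
move=> a0 cab; have [x _ hx] := Bezoutl b a0.
move: cab; rewrite /coprime => /eqP g1; rewrite g1 in hx.
exists ((a - 1) * x).
rewrite -(modnDr _ a).
have -> : (a - 1) * x * b + a = 1 + (a - 1) * (1 + x * b) by rewrite mulnDr muln1; timeout 20 lia.
rewrite -modnDmr; move/dvdnP: (dvdn_mull (a - 1) hx) => [m ->].
by rewrite modnMl addn0.
Qed.

Lemma mod_cancel a b b' x y : b' * b = 1 %[mod a] -> b * x = b * y %[mod a] ->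
  x = y %[mod a].
Proof.
move=> hb hxy.
have H : forall u, u = b' * (b * u) %[mod a].
  move=> u; rewrite mulnA -modnMml hb modnMml mul1n //.
by rewrite (H x) (H y) -modnMmr hxy modnMmr.
Qed.

Lemma modnDM x a y : x + a * y = x %[mod a].
Proof. by rewrite addnC mulnC modnMDl. Qed.

Definition Hyp a b c f g :=
  ((0 < a) /\ (2 * a <= b)) /\ ((c + g * a = f * b) /\ coprime a b) /\
  ((0 < g) /\ (2 * g <= f)).

Lemma valid_pt a b c f g n t0 y z : Hyp a b c f g -> t0 < a ->
  n = b * t0 %[mod a] -> n < b * t0 + a * b ->
  ((b*y + c*z <= n) && (a %| n - (b*y+c*z))) =
  ((y + f*z == t0) && (b*t0 <= n + a*g*z)) ||
  ((y + f*z == t0 + a) && (b*(t0+a) <= n + a*g*z)).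
Proof.
move=> [[a0 ba] [[ec cab] [g0 gf]]] t0a hn hnb.
have [b' hb'] := inv_mod a0 cab.
set s := b*y + c*z.
have es : s + a*g*z = b * (y + f*z).
  rewrite /s mulnDr -addnA; congr (_ + _).
  have : (c + g * a) * z = f * b * z by rewrite ec.
  timeout 20 lia.
apply/idP/idP.
  move=> /andP[sn].
  rewrite -eqn_mod_dvd // => /eqP hs.
  set t := y + f*z in es *.
  have ht : t = t0 %[mod a].
    apply: (mod_cancel hb'); rewrite -es -modnDml -hs hn modnDml.
    by rewrite -mulnA modnDM.
  have dt := divn_eq t a.
  rewrite ht (modn_small t0a) in dt.
  set k := t %/ a in dt.
  have [k0|[k1|k2]] : k = 0 \/ k = 1 \/ 2 <= k by clear; lia.
  - have tt0 : t = t0 by rewrite dt k0.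
    apply/orP; left; rewrite -tt0 eqxx /=.
    by rewrite -es leq_add2r.
  - have tt0 : t = t0 + a by rewrite dt k1 mul1n addnC.
    apply/orP; right; rewrite -tt0 eqxx /=.
    by rewrite -es leq_add2r.
  - exfalso; have tdef : y + f * z = t by [].
    clearbody k t s.
    have h0 : s + a * g * z = b * t0 + a * b * k by rewrite es dt; clear; lia.
    have h1 : b * (k - 1) < g * z.
      have : a * (b * k) < a * (b + g * z) by clear -h0 sn hnb; nia.
      rewrite ltn_pmul2l // mulnBr muln1; clear -k2; nia.
    have h2 : f * z < a * (k + 1).
      have : f * z <= t by rewrite -tdef leq_addl.
      rewrite dt => h; apply: leq_ltn_trans h _.
      by rewrite mulnDr muln1 mulnC ltn_add2l.
    have h3 : 2 * (g * z) <= f * z by rewrite mulnA leq_mul2r gf orbT.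
    clear -h1 h2 h3 ba k2; nia.
move=> /orP[/andP[/eqP ht hn2]|/andP[/eqP ht hn2]].
  rewrite ht in es.
  have sn : s <= n by move: hn2; rewrite -es leq_add2r.
  rewrite sn /= -eqn_mod_dvd // hn -es.
  by rewrite -mulnA modnDM.
rewrite ht in es.
have sn : s <= n by move: hn2; rewrite -es leq_add2r.
rewrite sn /= -eqn_mod_dvd // hn.
by rewrite -(modnDM s a (g*z)) mulnA es mulnDr (mulnC b a) modnDM.
Qed.


Lemma sum_y1 N w T (C : bool) : (w <= T -> C -> T - w < N) ->
  \sum_(y < N) ((y + w == T) && C : nat) = ((w <= T) && C).
Proof.
move=> hN.
case: (boolP ((w <= T) && C)) => [/andP[wT hC]|H].
  rewrite (bigD1 (Ordinal (hN wT hC))) //= subnK // eqxx hC big1 // => y /negbTE hy.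
  apply/eqP; rewrite eqb0; apply/negP => /andP[/eqP e _].
  move/negP: hy; apply; apply/eqP/val_inj => /=; lia.
rewrite big1 // => y _; apply/eqP; rewrite eqb0; apply/negP => /andP[/eqP e hC].
move/negP: H; apply; rewrite hC andbT; lia.
Qed.

Definition h0 a b f g n t0 (z : nat) : nat := (f*z <= t0) && (b*t0 <= n + a*g*z).
Definition h1 a b f g n t0 (z : nat) : nat := (f*z <= t0 + a) && (b*(t0+a) <= n + a*g*z).

Lemma Hyp_c a b c f g : Hyp a b c f g -> 0 < c.
Proof.
move=> [[a0 ba] [[ec cab] [g0 gf]]].
have : g * a < f * b.
  have : g * a < (2 * g) * (2 * a) by nia.
  move=> h; apply: (leq_trans h); exact: leq_mul.
rewrite -ec; lia.
Qed.

Lemma d_formula a b c f g n t0 : Hyp a b c f g -> t0 < a ->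
  n = b * t0 %[mod a] -> n < b * t0 + a * b ->
  num_reps [:: a; b; c] n = \sum_(z < n.+1) (h0 a b f g n t0 z + h1 a b f g n t0 z).
Proof.
move=> H t0a hn hnb.
have [[a0 ba] _] := H.
have c0 := Hyp_c H.
rewrite num_reps3 // exchange_big /=.
apply: eq_bigr => z _.
have E : forall y : 'I_n.+1, (((b*y + c*z <= n) && (a %| n - (b*y+c*z))) : nat) =
   ((y + f*z == t0) && (b*t0 <= n + a*g*z) : nat) +
   ((y + f*z == t0 + a) && (b*(t0+a) <= n + a*g*z) : nat).
  move=> y; rewrite (valid_pt y z H t0a hn hnb).
  case: eqP => e1; case: eqP => e2 //=; lia.
rewrite (eq_bigr _ (fun y _ => E y)) big_split /=.
have bnd : forall y, ((b*y + c*z <= n) && (a %| n - (b*y+c*z))) -> y < n.+1.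
  move=> y /andP[h _]; have : y <= b * y by rewrite leq_pmull //; lia.
  lia.
rewrite /h0 /h1 (sum_y1 (C := (b*t0 <= n + a*g*z))); last first.
  move=> le hc; apply: bnd; rewrite (valid_pt _ z H t0a hn hnb) subnK // eqxx hc //.
rewrite (sum_y1 (C := (b*(t0+a) <= n + a*g*z))) //.
move=> le hc; apply: bnd; rewrite (valid_pt _ z H t0a hn hnb) subnK // eqxx hc orbT //.
Qed.

Lemma h_bound a b c f g n t0 z : Hyp a b c f g -> t0 < a ->
  n = b * t0 %[mod a] -> n < b * t0 + a * b ->
  (0 < h0 a b f g n t0 z) || (0 < h1 a b f g n t0 z) -> z < n.+1.
Proof.
move=> H t0a hn hnb hh.
have c0 := Hyp_c H.
have : (b*(t0 + a - f*z) + c*z <= n) && (a %| n - (b*(t0 + a - f*z)+c*z)) \/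
       (b*(t0 - f*z) + c*z <= n) && (a %| n - (b*(t0 - f*z)+c*z)).
  move: hh; rewrite /h0 /h1.
  case: (boolP (f * z <= t0)) => h1' /=; case: (boolP (b * t0 <= n + a * g * z)) => h2' /=;
  case: (boolP (f * z <= t0 + a)) => h3' /=; case: (boolP (b * (t0 + a) <= n + a * g * z)) => h4' //= _;
  try (by right; rewrite (valid_pt _ z H t0a hn hnb) subnK // eqxx h2');
  by left; rewrite (valid_pt _ z H t0a hn hnb) subnK // eqxx h4' orbT.
case=> /andP[h _]; move: h; move: (b * (_ - _)) => X h; have hz : z <= c * z by rewrite leq_pmull.
all: clear -h hz; lia.
Qed.

Lemma sum_widen_le N M (F G : nat -> nat) : N <= M -> (forall i, i < N -> F i <= G i) ->
  \sum_(i < N) F i <= \sum_(i < M) G i.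
Proof.
move=> NM hFG; rewrite (big_ord_widen _ _ NM) big_mkcond /=.
apply: leq_sum => i _; case: ifP => // /hFG //.
Qed.

Lemma num_reps_mono a b c n m : 0 < a ->
  num_reps [:: a; b; c] n <= num_reps [:: a; b; c] (n + a * m).
Proof.
move=> a0; rewrite !num_reps3 //.
apply: (sum_widen_le (F := fun y => \sum_(z < n.+1) ((b*y + c*z <= n) && (a %| n - (b*y+c*z)) : nat))
   (G := fun y => \sum_(z < (n + a * m).+1) ((b*y + c*z <= n + a * m) && (a %| n + a * m - (b*y+c*z)) : nat))).
  by rewrite ltnS leq_addr.
move=> y _.
apply: (sum_widen_le (F := fun z => ((b*y + c*z <= n) && (a %| n - (b*y+c*z)) : nat))
   (G := fun z => ((b*y + c*z <= n + a * m) && (a %| n + a * m - (b*y+c*z)) : nat))).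
  by rewrite ltnS leq_addr.
move=> z _.
case: (boolP ((b*y + c*z <= n) && (a %| n - (b*y+c*z)))) => //= /andP[h1 h2].
have -> : b * y + c * z <= n + a * m by lia.
have -> : n + a * m - (b * y + c * z) = (n - (b*y + c*z)) + a * m by lia.
by rewrite dvdn_add // dvdn_mulr.
Qed.


Lemma cnt_range N lo hi : \sum_(z < N) ((lo <= z <= hi) : nat) = minn N hi.+1 - lo.
Proof.
elim: N => [|N IH]; first by rewrite big_ord0; lia.
rewrite big_ord_recr /= IH; case: (boolP (lo <= N <= hi)) => /= h; lia.
Qed.

Lemma sum_ub N (h : nat -> nat) lo hi :
  (forall z, z < N -> h z <= (lo <= z <= hi)) -> \sum_(z < N) h z <= hi.+1 - lo.
Proof.
move=> H; apply: (@leq_trans (\sum_(z < N) ((lo <= z <= hi) : nat))).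
  by apply: leq_sum => z _; apply: H.
rewrite cnt_range; lia.
Qed.

Lemma sum_lb N (h : nat -> nat) lo hi : hi < N ->
  (forall z, lo <= z <= hi -> 1 <= h z) -> hi.+1 - lo <= \sum_(z < N) h z.
Proof.
move=> hN H; apply: (@leq_trans (\sum_(z < N) ((lo <= z <= hi) : nat))).
  rewrite cnt_range; lia.
apply: leq_sum => z _; case: (boolP (lo <= z <= hi)) => // /H //.
Qed.

Definition Wt a b f g p t0 :=
  if p <= t0 %/ f then b*t0 - a*g*(t0 %/ f - p)
  else b*t0 + a*b - a*g*((t0 + a) %/ f + t0 %/ f + 1 - p).


Lemma basic_facts a b c f g p t0 : Hyp a b c f g -> t0 < a -> p <= (a - 1) %/ f ->
  let q := t0 %/ f in let Q := (t0 + a) %/ f in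
  [/\ 0 < f, q * f <= t0, Q * f <= t0 + a, a * g * q <= b * t0 & p <= Q] /\
  (g * Q < a) /\ (forall z, f * z <= t0 -> z <= q) /\ (forall z, f * z <= t0 + a -> z <= Q).
Proof.
move=> [[a0 ba] [[ec cab] [g0 gf]]] t0a pr q Q.
have f0 : 0 < f by lia.
have fq : q * f <= t0 by apply: leq_trunc_div.
have fQ : Q * f <= t0 + a by apply: leq_trunc_div.
split; [split => // | split; [|split]].
- have h1 : 2 * g * q <= t0 by apply: leq_trans fq; rewrite mulnC leq_mul2l gf orbT.
  have h2 : a * (2 * g * q) <= a * t0 by rewrite leq_mul2l h1 orbT.
  have h3 : 2 * a * t0 <= b * t0 by rewrite leq_mul2r ba orbT.
  clear -h2 h3; lia.
- apply: leq_trans pr _; apply: leq_div2r; lia.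
- have h1 : 2 * g * Q <= t0 + a by apply: leq_trans fQ; rewrite mulnC leq_mul2l gf orbT.
  clear -h1 t0a; lia.
- by move=> z hz; rewrite leq_divRL // mulnC.
- by move=> z hz; rewrite leq_divRL // mulnC.
Qed.

Lemma upper a b c f g p t0 n : Hyp a b c f g -> t0 < a -> p <= (a - 1) %/ f ->
  n = b * t0 %[mod a] -> n < Wt a b f g p t0 -> num_reps [:: a; b; c] n <= p.
Proof.
move=> H t0a pr hn hW.
have [[a0 ba] [[ec cab] [g0 gf]]] := H.
have [[f0 fq fQ agq pQ] [gQ [zq zQ]]] := basic_facts H t0a pr.
set q := t0 %/ f in fq agq zq hW.
set Q := (t0 + a) %/ f in fQ pQ gQ zQ hW.
have ag0 : 0 < a * g by rewrite muln_gt0 a0 g0.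
have gQb : g * Q < b by lia.
move: hW; rewrite /Wt -/q -/Q; clearbody q Q.
case: (leqP p q) => pq; move Ydef: (a * g * (q - p)) => Y;
  move Kdef: (a * g * (Q + q + 1 - p)) => K hW.
- have eY : Y <= a * g * q by rewrite -Ydef leq_mul2l leq_subr orbT.
  have ab0 : a * b > 0 by rewrite muln_gt0 a0; clear -a0 ba; lia.
  have hnb : n < b * t0 + a * b by clear -hW eY agq ab0; lia.
  rewrite (d_formula H t0a hn hnb) big_split /=.
  have -> : p = (q.+1 - (q - p).+1) + (0.+1 - 1) by clear -pq; lia.
  apply: leq_add; apply: sum_ub => z _.
    rewrite /h0; case: (boolP (f * z <= t0)) => //= fz.
    case: (boolP (b * t0 <= n + a * g * z)) => //= bz.
    rewrite (zq _ fz) andbT.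
    have : Y < a * g * z by clear -eY agq hW bz; lia.
    by rewrite -Ydef ltn_pmul2l // => ->.
  rewrite /h1; case: (boolP (f * z <= t0 + a)) => //= fz.
  case: (boolP (b * (t0 + a) <= n + a * g * z)) => //= bz.
  exfalso.
  have : a * b < a * g * z by rewrite mulnDr in bz; clear -eY agq hW bz; lia.
  rewrite -mulnA ltn_pmul2l // => bgz.
  have : g * z <= g * Q by rewrite leq_mul2l zQ ?orbT.
  clear -bgz gQb; lia.
- have eK : K <= a * b.
    rewrite -Kdef -mulnA leq_mul2l; apply/orP; right.
    apply: leq_trans (ltnW gQb); rewrite leq_mul2l; apply/orP; right; clear -pq; lia.
  have hnb : n < b * t0 + a * b by clear -hW eK; lia.
  rewrite (d_formula H t0a hn hnb) big_split /=.
  have -> : p = (q.+1 - 0) + (Q.+1 - (Q + q + 1 - p).+1) by clear -pq pQ; lia.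
  apply: leq_add; apply: sum_ub => z _.
    rewrite /h0; case: (boolP (f * z <= t0)) => //= fz.
    by rewrite (zq _ fz) leq_b1.
  rewrite /h1; case: (boolP (f * z <= t0 + a)) => //= fz.
  case: (boolP (b * (t0 + a) <= n + a * g * z)) => //= bz.
  rewrite (zQ _ fz) andbT.
  have : K < a * g * z by rewrite mulnDr in bz; clear -eK bz hW; lia.
  by rewrite -Kdef ltn_pmul2l // => ->.
Qed.

Lemma W_props a b c f g p t0 : Hyp a b c f g -> t0 < a -> p <= (a - 1) %/ f ->
  Wt a b f g p t0 = b * t0 %[mod a] /\ Wt a b f g p t0 < b * t0 + a * b.
Proof.
move=> H t0a pr.
have [[a0 ba] [[ec cab] [g0 gf]]] := H.
have [[f0 fq fQ agq pQ] [gQ [zq zQ]]] := basic_facts H t0a pr.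
rewrite /Wt.
set q := t0 %/ f in fq agq zq *.
set Q := (t0 + a) %/ f in fQ pQ gQ zQ *.
clearbody q Q.
have ab0 : a * b > 0 by rewrite muln_gt0 a0; clear -a0 ba; lia.
case: (leqP p q) => pq.
  have eY : a * g * (q - p) <= a * g * q by rewrite leq_mul2l leq_subr orbT.
  move: eY; move Ydef: (a * g * (q - p)) => Y eY.
  split; last by clear -eY agq ab0; lia.
  have e : b * t0 = (b * t0 - Y) + a * (g * (q - p)) by rewrite mulnA Ydef; clear -eY agq; lia.
  by rewrite [in RHS]e modnDM.
have eK : a * g * (Q + q + 1 - p) <= a * b.
  rewrite -mulnA leq_mul2l; apply/orP; right.
  apply: leq_trans (ltnW (_ : g * Q < b)) ; last by clear -gQ ba; lia.
  rewrite leq_mul2l; apply/orP; right; clear -pq; lia.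
have K0 : 0 < a * g * (Q + q + 1 - p) by rewrite !muln_gt0 a0 g0 /=; clear -pq pQ; lia.
move: eK K0; move Kdef: (a * g * (Q + q + 1 - p)) => K eK K0.
split; last by clear -eK K0; lia.
have e : b * t0 + a * b - K + a * (g * (Q + q + 1 - p)) = b * t0 + a * b.
  by rewrite mulnA Kdef; clear -eK; lia.
by rewrite -(modnDM _ a (g * (Q + q + 1 - p))) e modnDM.
Qed.

Lemma lower a b c f g p t0 : Hyp a b c f g -> t0 < a -> p <= (a - 1) %/ f ->
  p < num_reps [:: a; b; c] (Wt a b f g p t0).
Proof.
move=> H t0a pr.
have [[a0 ba] [[ec cab] [g0 gf]]] := H.
have [hW hWb] := W_props H t0a pr.
have [[f0 fq fQ agq pQ] [gQ [zq zQ]]] := basic_facts H t0a pr.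
rewrite (d_formula H t0a hW hWb) big_split /=.
have hb := fun z => h_bound (z := z) H t0a hW hWb.
move: hW hWb hb; rewrite /Wt.
set q := t0 %/ f in fq agq zq *.
set Q := (t0 + a) %/ f in fQ pQ gQ zQ *.
clearbody q Q.
set W := (if p <= q then _ else _).
have fle : forall z, z <= q -> f * z <= t0.
  by move=> z hz; apply: leq_trans fq; rewrite mulnC leq_mul2r hz orbT.
have fle2 : forall z, z <= Q -> f * z <= t0 + a.
  by move=> z hz; apply: leq_trans fQ; rewrite mulnC leq_mul2r hz orbT.
have ab0 : a * b > 0 by rewrite muln_gt0 a0; clear -a0 ba; lia.
move=> hW hWb hb.
case: (leqP p q) => pq; rewrite /W in hb *.
  rewrite pq in hb *.
  have eY : a * g * (q - p) <= a * g * q by rewrite leq_mul2l leq_subr orbT.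
  have h0z : forall z, q - p <= z <= q -> 1 <= h0 a b f g (b * t0 - a * g * (q - p)) t0 z.
    move=> z /andP[z1 z2]; rewrite /h0 fle //=.
    have : a * g * (q - p) <= a * g * z by rewrite leq_mul2l z1 orbT.
    move: eY; move: (a * g * (q - p)) => Y eY hY.
    have -> : b * t0 <= b * t0 - Y + a * g * z by clear -eY agq hY; lia.
    by [].
  have qW : q < (b * t0 - a * g * (q - p)).+1.
    apply: (hb q); apply/orP; left; apply: h0z; rewrite leqnn andbT; exact: leq_subr.
  have := sum_lb qW h0z.
  move=> h; apply: leq_trans (leq_addr _ _); apply: leq_trans h; clear -pq; lia.
rewrite leqNgt pq /= in hb *.
have eK : a * g * (Q + q + 1 - p) <= a * b.
  rewrite -mulnA leq_mul2l; apply/orP; right.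
  apply: leq_trans (ltnW (_ : g * Q < b)) ; last by clear -gQ ba; lia.
  rewrite leq_mul2l; apply/orP; right; clear -pq; lia.
set Wv := b * t0 + a * b - a * g * (Q + q + 1 - p) in hb *.
have h0z : forall z, 0 <= z <= q -> 1 <= h0 a b f g Wv t0 z.
  move=> z /andP[_ z2]; rewrite /h0 fle //=.
  have -> : b * t0 <= Wv + a * g * z.
    rewrite /Wv; move: eK; move: (a * g * (Q + q + 1 - p)) => K eK; clear -eK; lia.
  by [].
have h1z : forall z, Q + q + 1 - p <= z <= Q -> 1 <= h1 a b f g Wv t0 z.
  move=> z /andP[z1 z2]; rewrite /h1 fle2 //=.
  have hz : a * g * (Q + q + 1 - p) <= a * g * z by rewrite leq_mul2l z1 orbT.
  have -> : b * (t0 + a) <= Wv + a * g * z.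
    rewrite /Wv mulnDr; move: eK hz; move: (a * g * (Q + q + 1 - p)) => K eK hK; clear -eK hK; lia.
  by [].
have qW : q < Wv.+1.
  apply: (hb q); apply/orP; left; apply: h0z; rewrite leqnn.
  by [].
have QW : Q < Wv.+1.
  apply: (hb Q); apply/orP; right; apply: h1z; rewrite leqnn andbT; clear -pq; lia.
have := sum_lb qW h0z; have := sum_lb QW h1z.
move=> e1 e2; have := leq_add e2 e1; apply: leq_trans; clear -pq pQ; lia.
Qed.


Lemma char a b c f g p t0 n : Hyp a b c f g -> t0 < a -> p <= (a - 1) %/ f ->
  n = b * t0 %[mod a] ->
  (num_reps [:: a; b; c] n <= p) = (n < Wt a b f g p t0).
Proof.
move=> H t0a pr hn.
have [[a0 _] _] := H.
case: (ltnP n (Wt a b f g p t0)) => hW; first by rewrite (upper H t0a pr hn hW).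
have [hW1 _] := W_props H t0a pr.
apply/negbTE; rewrite -ltnNge.
have : Wt a b f g p t0 = n %[mod a] by rewrite hW1 hn.
move/eqP; rewrite eq_sym eqn_mod_dvd // => /dvdnP[m hm].
have -> : n = Wt a b f g p t0 + a * m by rewrite mulnC -hm subnKC.
apply: leq_trans (lower H t0a pr) (num_reps_mono _ _ _ _ a0).
Qed.

Lemma window a e M : 0 < a -> e < a ->
  \sum_(M <= n < M + a) ((n %% a == e) : nat) = 1.
Proof.
move=> a0 ea; elim: M => [|M IH].
  rewrite add0n big_mkord.
  rewrite (_ : 1 = ((0 <= e) && true : nat)) //.
  rewrite -(sum_y1 (N:=a) (w:=0) (T:=e) (C:=true)); last by move=> _ _; rewrite subn0.
  by apply: eq_bigr => i _; rewrite addn0 andbT modn_small.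
rewrite big_ltn in IH; last by lia.
rewrite addSn big_nat_recr /=; last by lia.
rewrite modnDr; lia.
Qed.

Lemma cnt_class a e m : 0 < a -> e < a ->
  \sum_(0 <= n < m * a + e) ((n %% a == e) : nat) = m.
Proof.
move=> a0 ea; elim: m => [|m IH].
  rewrite mul0n add0n big1_seq // => n /andP[_]; rewrite mem_index_iota => /andP[_ ne].
  by rewrite modn_small ?(ltn_trans ne) // (ltn_eqF ne).
have e1 : m.+1 * a + e = (m * a + e) + a by lia.
rewrite e1 (big_cat_nat _ (n := m * a + e)) /=; try lia.
rewrite IH window //; lia.
Qed.

Lemma count_class N W a : 0 < a -> W <= N ->
  \sum_(n < N) (((n %% a == W %% a) && (n < W)) : nat) = W %/ a.
Proof.
move=> a0 WN.
rewrite -(@big_mkord _ 0 addn N xpredT (fun n => ((n %% a == W %% a) && (n < W) : nat))) (big_cat_nat _ (n := W)) //= [X in _ + X]big1_seq ?addn0; last first.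
  by move=> n /andP[_]; rewrite mem_index_iota => /andP[h _]; rewrite ltnNge h andbF.
rewrite (eq_big_seq (fun n => ((n %% a == W %% a) : nat))); last first.
  by move=> n; rewrite mem_index_iota => /andP[_ ->]; rewrite andbT.
rewrite {1}(divn_eq W a) cnt_class //; exact: ltn_pmod.
Qed.

Lemma count_le_eq a b c f g p N : Hyp a b c f g -> p <= (a - 1) %/ f ->
  (forall t, t < a -> Wt a b f g p t <= N) ->
  count_le [:: a; b; c] p N = \sum_(t < a) (Wt a b f g p t %/ a).
Proof.
move=> H pr hN.
have [[a0 _] [[_ cab] _]] := H.
have [b' hb'] := inv_mod a0 cab.
pose tau n := (b' * n) %% a.
have tauP : forall n, tau n < a by move=> n; exact: ltn_pmod.
have tauE : forall n, n = b * tau n %[mod a].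
  by move=> n; rewrite modnMmr mulnA (mulnC b) -modnMml hb' modnMml mul1n //.
have tauI : forall n t, t < a -> (tau n == t) = (n %% a == Wt a b f g p t %% a).
  move=> n t ta; have [hW _] := W_props H ta pr; rewrite hW.
  apply/eqP/eqP => [<-|e]; first by rewrite -tauE.
  by rewrite /tau -modnMmr e modnMmr mulnA -modnMml hb' modnMml mul1n modn_small //.
rewrite /count_le -sum1_card big_mkcond /=.
under eq_bigr => n _ do rewrite inE (char H (tauP n) pr (tauE n)).
have E : forall n : 'I_N, ((n < Wt a b f g p (tau n)) : nat) =
   \sum_(t < a) ((tau n == t) && (n < Wt a b f g p t) : nat).
  move=> n.
  rewrite (eq_bigr (fun t : 'I_a => ((t + 0 == tau n) && (n < Wt a b f g p (tau n)) : nat))).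
    rewrite sum_y1; last by move=> _ _; rewrite subn0.
    by case: (n < Wt a b f g p (tau n)).
  move=> t _; rewrite addn0 eq_sym; case: eqP => [->|] //; by case: (_ < _).
rewrite (eq_bigr _ (fun n _ => E n)) /= exchange_big /=.
apply: eq_bigr => t _.
rewrite -(count_class a0 (hN _ (ltn_ord t))).
by apply: eq_bigr => n _; rewrite tauI.
Qed.


Lemma pair_term a b t : coprime a b -> 0 < t < a ->
  b * t %/ a + b * (a - t) %/ a = b - 1.
Proof.
move=> cab /andP[t0 ta].
have a0 : 0 < a by apply: leq_trans ta.
have eX := divn_eq (b * t) a.
set q1 := b * t %/ a in eX *; set r1 := b * t %% a in eX.
have r1a : r1 < a by apply: ltn_pmod.
have r10 : 0 < r1.
  rewrite lt0n; apply/negP => /eqP r0.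
  have : a %| b * t by apply/dvdnP; exists q1; rewrite eX r0 addn0.
  rewrite Gauss_dvdr // => /(dvdn_leq t0); rewrite leqNgt ta.
  by [].
have b0 : 0 < b.
  move: cab; case: (b) => //; rewrite /coprime gcdn0 => /eqP a1; clear -a1 t0 ta; lia.
have bt : b * t < b * a by rewrite ltn_pmul2l.
clearbody q1 r1.
have qb : q1 < b.
  have : q1 * a < b * a by clear -eX bt; lia.
  by rewrite ltn_pmul2r.
have e2 : b * (a - t) = (b - q1 - 1) * a + (a - r1).
  rewrite mulnBr !mulnBl mul1n; clear -eX bt qb r1a r10; nia.
by rewrite e2 divnMDl // divn_small; [clear -qb; lia | clear -r10 r1a; lia].
Qed.

Lemma sum_floor a b : coprime a b -> 0 < a ->
  2 * \sum_(t < a) (b * t %/ a) = (a - 1) * (b - 1).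
Proof.
move=> cab a0.
rewrite -(big_mkord xpredT (fun t => b * t %/ a)) big_ltn //= muln0 div0n add0n.
rewrite mul2n -addnn {2}big_nat_rev /= -big_split /=.
rewrite (eq_big_nat _ _ (F2 := fun _ => b - 1)); last first.
  move=> t ht; rewrite (_ : 1 + a - t.+1 = a - t); last lia.
  by apply: pair_term; lia.
rewrite sum_nat_const_nat; lia.
Qed.

Lemma block_sum f R E : 0 < f -> E <= f ->
  \sum_(f * R <= t < f * R + E) (t %/ f) = E * R.
Proof.
move=> f0; elim: E => [|E IH] hE; first by rewrite addn0 big_geq.
rewrite addnS big_nat_recr /=; last lia.
rewrite IH; last lia.
rewrite (_ : f * R + E = R * f + E); last lia.
rewrite divnMDl // divn_small; lia.
Qed.

Lemma T_sum f R E : 0 < f -> E <= f ->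
  2 * \sum_(0 <= t < f * R + E) (t %/ f) = f * R * (R - 1) + 2 * (E * R).
Proof.
move=> f0 hE.
have TR : forall R, 2 * \sum_(0 <= t < f * R) (t %/ f) = f * R * (R - 1).
  elim=> [|R' IH]; first by rewrite muln0 big_geq.
  rewrite (_ : f * R'.+1 = f * R' + f); last lia.
  rewrite (big_cat_nat _ (n := f * R')) //=; last lia.
  rewrite block_sum // mulnDr IH; nia.
rewrite (big_cat_nat _ (n := f * R)) //=; last lia.
by rewrite block_sum // mulnDr TR.
Qed.

Lemma sub_sum m n (F : nat -> nat) c : (forall t, m <= t < n -> c <= F t) ->
  \sum_(m <= t < n) (F t - c) + (n - m) * c = \sum_(m <= t < n) F t.
Proof.
move=> H; rewrite -sum_nat_const_nat -big_split /=.
by apply: eq_big_nat => t /H ht; rewrite subnK.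
Qed.

Lemma divn_addM m k d : 0 < d -> (m + k * d) %/ d = m %/ d + k.
Proof. by move=> d0; rewrite addnC divnMDl // addnC. Qed.

Lemma C1 a b c f g p t : Hyp a b c f g -> t < a -> p <= (a - 1) %/ f ->
  if p <= t %/ f then Wt a b f g p t %/ a + g * (t %/ f - p) = b * t %/ a
  else Wt a b f g p t %/ a + g * ((t + a) %/ f + t %/ f + 1 - p) = b * t %/ a + b.
Proof.
move=> H ta pr.
have [[a0 ba] [[ec cab] [g0 gf]]] := H.
have [[f0 fq fQ agq pQ] [gQ [zq zQ]]] := basic_facts H ta pr.
rewrite /Wt.
set q := t %/ f in fq agq zq *.
set Q := (t + a) %/ f in fQ pQ gQ zQ *.
clearbody q Q.
case: (leqP p q) => pq.
  have eY : a * g * (q - p) <= a * g * q by rewrite leq_mul2l leq_subr orbT.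
  have e : b * t = (b * t - a * g * (q - p)) + (g * (q - p)) * a.
    rewrite (mulnC _ a) mulnA; move: eY; move: (a * g * (q - p)) => Y eY.
    clear -eY agq; lia.
  by rewrite [in RHS]e divn_addM.
have eK : a * g * (Q + q + 1 - p) <= a * b.
  rewrite -mulnA leq_mul2l; apply/orP; right.
  apply: leq_trans (ltnW (_ : g * Q < b)) ; last by clear -gQ ba; lia.
  rewrite leq_mul2l; apply/orP; right; clear -pq; lia.
have e : b * t + b * a = (b * t + a * b - a * g * (Q + q + 1 - p)) + (g * (Q + q + 1 - p)) * a.
  rewrite (mulnC (g * _) a) mulnA; move: eK; move: (a * g * (Q + q + 1 - p)) => K eK.
  clear -eK; lia.
have := congr1 (fun x => x %/ a) e => /=.
rewrite divn_addM // divn_addM // => <-.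
Qed.

Lemma pf_le a f p : 0 < f -> p <= (a - 1) %/ f -> p * f <= a - 1.
Proof. by move=> f0 pr; rewrite -leq_divRL. Qed.

Lemma msum a b c f g p : Hyp a b c f g -> p <= (a - 1) %/ f ->
  \sum_(t < a) (Wt a b f g p t %/ a) +
   g * (\sum_(0 <= t < p * f) ((t + a) %/ f + t %/ f + 1 - p) +
        \sum_(p * f <= t < a) (t %/ f - p))
  = \sum_(t < a) (b * t %/ a) + p * f * b.
Proof.
move=> H pr.
have [[a0 ba] [[ec cab] [g0 gf]]] := H.
have f0 : 0 < f by lia.
have pfa := pf_le f0 pr.
rewrite -(big_mkord xpredT (fun t => Wt a b f g p t %/ a)).
rewrite -(big_mkord xpredT (fun t => b * t %/ a)).
rewrite !(big_cat_nat _ (n := p * f) (m := 0) (p := a)) //=; try (timeout 10 lia).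
rewrite mulnDr !big_distrr /=.
have E1 : \sum_(0 <= t < p * f) (Wt a b f g p t %/ a) +
    \sum_(0 <= t < p * f) g * ((t + a) %/ f + t %/ f + 1 - p) =
    \sum_(0 <= t < p * f) (b * t %/ a) + p * f * b.
  rewrite -big_split /= -[p * f in X in _ = _ + X * _]subn0 -sum_nat_const_nat -big_split /=.
  apply: eq_big_nat => t /andP[_ ht].
  have ta : t < a by lia.
  have := C1 H ta pr; rewrite leqNgt ltn_divLR // ht /=; by [].
have E2 : \sum_(p * f <= t < a) (Wt a b f g p t %/ a) +
    \sum_(p * f <= t < a) g * (t %/ f - p) = \sum_(p * f <= t < a) (b * t %/ a).
  rewrite -big_split /=.
  apply: eq_big_nat => t /andP[ht ta].
  have := C1 H ta pr; rewrite leq_divRL // ht /=; by [].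
move: E1 E2; clear; timeout 20 lia.
Qed.

Lemma C3 a f p : 0 < f -> p <= (a - 1) %/ f ->
  \sum_(0 <= t < p * f) ((t + a) %/ f + t %/ f + 1 - p) +
  \sum_(p * f <= t < a) (t %/ f - p) + p * a
  = \sum_(0 <= t < a + p * f) (t %/ f) + p * f.
Proof.
move=> f0 pr.
have pfa := pf_le f0 pr.
have S1 := @sub_sum 0 (p * f) (fun t => (t + a) %/ f + t %/ f + 1) p.
have S2 := @sub_sum (p * f) a (fun t => t %/ f) p.
have S1' : \sum_(0 <= t < p * f) ((t + a) %/ f + t %/ f + 1 - p) + p * f * p =
   \sum_(0 <= t < p * f) ((t + a) %/ f + t %/ f + 1).
  rewrite -S1; first by rewrite subn0.
  move=> x _.
  apply: leq_trans pr _; apply: leq_trans (leq_div2r f (_ : a - 1 <= x + a)) _.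
    exact: leq_trans (leq_subr 1 a) (leq_addl x a).
  by rewrite -addnA leq_addr.
have S2' : \sum_(p * f <= t < a) (t %/ f - p) + (a - p * f) * p =
   \sum_(p * f <= t < a) (t %/ f).
  by rewrite -S2 // => x /andP[hx _]; rewrite leq_divRL.
have e : p * a = p * f * p + (a - p * f) * p.
  rewrite -mulnDl subnKC; first by rewrite mulnC.
  apply: leq_trans pfa (leq_subr 1 a).
have E3 : \sum_(0 <= t < p * f) ((t + a) %/ f + t %/ f + 1) =
   \sum_(0 <= t < p * f) ((t + a) %/ f) + \sum_(0 <= t < p * f) (t %/ f) + p * f.
  by rewrite !big_split /= sum_nat_const_nat subn0 muln1.
have E4 : \sum_(0 <= t < p * f) ((t + a) %/ f) = \sum_(a <= t < a + p * f) (t %/ f).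
  have := @big_addn _ 0 addn 0 (a + p * f) a xpredT (fun t => t %/ f).
  by rewrite add0n addKn => ->.
have E5 : \sum_(0 <= t < a + p * f) (t %/ f) =
  \sum_(0 <= t < a) (t %/ f) + \sum_(a <= t < a + p * f) (t %/ f).
  by rewrite (big_cat_nat _ (n := a)) //; apply: leq_addr.
have E6 : \sum_(0 <= t < a) (t %/ f) =
  \sum_(0 <= t < p * f) (t %/ f) + \sum_(p * f <= t < a) (t %/ f).
  by rewrite (big_cat_nat _ (n := p * f)) //; apply: leq_trans pfa (leq_subr 1 a).
move: S1' S2' E3 E4 E5 E6 e; clear; lia.
Qed.


Lemma exists_class a b c f g n : Hyp a b c f g ->
  exists t0, t0 < a /\ n = b * t0 %[mod a].
Proof.
move=> [[a0 _] [[_ cab] _]].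
have [b' hb'] := inv_mod a0 cab.
exists ((b' * n) %% a); split; first exact: ltn_pmod.
by rewrite modnMmr mulnA (mulnC b) -modnMml hb' modnMml mul1n.
Qed.

Lemma gen a b c f g p : Hyp a b c f g -> p <= (a - 1) %/ f ->
  is_sylvester_p [:: a; b; c] p (\sum_(t < a) (Wt a b f g p t %/ a)) /\
  2 * (\sum_(t < a) (Wt a b f g p t %/ a)) +
    g * (f * ((a - 1) %/ f + p) * ((a - 1) %/ f + p) +
         2 * ((a - f * ((a - 1) %/ f)) * ((a - 1) %/ f + p)) + 2 * (p * f))
  = (a - 1) * (b - 1) + 2 * (p * f * b) + 2 * (g * (p * a)) + g * (f * ((a - 1) %/ f + p)).
Proof.
move=> H pr.
have [[a0 ba] [[ec cab] [g0 gf]]] := H.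
have f0 : 0 < f by lia.
have Wle : forall t, t < a -> Wt a b f g p t <= a * b + a * b.
  move=> t ta; have [_ hWb] := W_props H ta pr.
  have : b * t <= b * a by rewrite leq_mul2l ltnW ?orbT.
  clear -hWb; lia.
split.
  exists (a * b + a * b); split; last by apply: count_le_eq.
  move=> n hn; have [t0 [t0a hn0]] := exists_class n H.
  rewrite ltnNge (char H t0a pr hn0) -leqNgt.
  have [_ hWb] := W_props H t0a pr.
  have : b * t0 <= b * a by rewrite leq_mul2l ltnW ?orbT.
  clear -hWb hn; lia.
set m := \sum_(t < a) _.
set r := (a - 1) %/ f.
have M := msum H pr; rewrite -/m in M.
have C := C3 f0 pr.
have F := sum_floor cab a0.
have er := divn_eq (a - 1) f; rewrite -/r in er.
have rem := ltn_pmod (a - 1) f0.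
have eA : a + p * f = f * (r + p) + (a - f * r) by clear -er a0; lia.
have eE : a - f * r <= f by clear -er rem a0; lia.
have TT := T_sum (r + p) f0 eE; rewrite -eA in TT.
move: M C F TT.
set S1 := \sum_(0 <= t < p * f) _.
set S2 := \sum_(p * f <= t < a) _.
set B := \sum_(t < a) _.
set T := \sum_(0 <= t < a + p * f) _.
move=> M C F TT.
have fRR : f * (r + p) * (r + p - 1) + f * (r + p) = f * (r + p) * (r + p).
  case: (r + p) => [|R]; first by rewrite !muln0.
  by rewrite subSS subn0 [RHS]mulnS addnC.
have h1 : f * (r + p) * (r + p) + 2 * ((a - f * r) * (r + p)) + 2 * (p * f)
   = 2 * (S1 + S2) + 2 * (p * a) + f * (r + p).
  move: fRR TT C; clear; lia.
rewrite h1 !mulnDr.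
move: M F; clear; lia.
Qed.

From mathcomp Require Import ring.
Unset Implicit Arguments.
Import GRing.Theory Num.Theory.
Local Open Scope ring_scope.


Lemma fib_hyp (i k : nat) : (3 <= i)%N -> (3 <= k)%N ->
  Hyp (fib i) (fib (i + 2)) (fib (i + k)) (fib k) (fib (k - 2)).
Proof.
move=> hi hk.
have ei : (i + 2 = i.+2)%N by rewrite addn2.
split; [split|split; [split|split]].
- by apply: fib_pos; lia.
- rewrite ei fibSS; have := fib_mono i; lia.
- have ek : ((k - 2).+2 = k)%N by lia.
  have := fib_add i (k - 2); rewrite ek => <-.
  by rewrite mulnC.
- by rewrite /coprime ei fibSS gcdnDr; exact: coprime_fibS.
- by apply: fib_pos; lia.
- have ek : (k = (k - 2).+2)%N by lia.
  rewrite [X in (_ <= fib X)%N]ek fibSS; have := fib_mono (k - 2); lia.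
Qed.

Theorem theorem13 (i k p : nat) :
  (3 <= i)%N -> (3 <= k)%N ->
  let r := ((fib i).-1 %/ fib k)%N in
  (p <= r)%N ->
  exists m : nat,
    is_sylvester_p [:: fib i; fib (i + 2); fib (i + k)] p m /\
    (m%:R : rat) =
      (1/2) * (((fib i)%:R + 2 * p%:R * (fib k)%:R - 1) * (fib (i + 2))%:R
               - (fib i)%:R + 1)
      - (1/2) * (2 * r%:R * (fib i)%:R
                 - (r%:R + p%:R + 1) * (r%:R - p%:R) * (fib k)%:R)
        * (fib (k - 2))%:R.
Proof.
move=> hi hk r hp.
have H := @fib_hyp i k hi hk.
have [[a0 ba] [[ec cab] [g0 gf]]] := H.
have pr : (p <= (fib i - 1) %/ fib k)%N by rewrite subn1.
have [Hs Heq] := gen H pr.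
exists (\sum_(t < fib i) (Wt (fib i) (fib (i + 2)) (fib k) (fib (k - 2)) p t %/ fib i))%N.
split; first exact: Hs.
move: Heq.
set m := (\sum_(t < fib i) _)%N.
rewrite (_ : ((fib i - 1) %/ fib k = r)%N); last by rewrite subn1.
set a := fib i in a0 ba ec cab *.
set b := fib (i + 2) in ba ec cab *.
set f := fib k in ec gf *.
set g := fib (k - 2) in g0 gf ec *.
have f0 : (0 < f)%N by lia.
have fr : (f * r <= a)%N.
  rewrite /r mulnC; apply: leq_trans (leq_trunc_div _ _) _; lia.
have hA : a = ((a - 1) + 1)%N by lia.
have hB : b = ((b - 1) + 1)%N by lia.
have hE : a = ((a - f * r) + f * r)%N by lia.
move: hA hB hE; move: (a - 1)%N (b - 1)%N (a - f * r)%N => A1 B1 Ev hA hB hE.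
rewrite !mul2n -!addnn.
move/(congr1 (fun x : nat => x%:R : rat)); rewrite !(natrD, natrM) => E.
move: hA hB hE => /(congr1 (fun x : nat => x%:R : rat)) hA
  /(congr1 (fun x : nat => x%:R : rat)) hB /(congr1 (fun x : nat => x%:R : rat)) hE.
rewrite !(natrD, natrM) in hA hB hE.
have hEv : (Ev%:R : rat) = a%:R - f%:R * r%:R by rewrite hE; ring.
rewrite hEv in E.
rewrite hB hA in E *.
move: E; match goal with |- (?M + ?M + ?G = ?R) -> _ =>
  move=> E; have E' : (m%:R : rat) = (R - G) / 2 by rewrite -E; field end.
rewrite E'; field.
by [].
Qed.
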